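(* Let $\varphi$ be any forecasting system (not necessarily computable or non-degenerate) and $\omega\in\Omega$. If $\omega$ is Martin-Löf test random for $\varphi$, then $\omega$ is Martin-Löf random for $\varphi$.
   Context: Notation: $\mathbb N_0=\{0,1,\dots\}$; $\Omega=\{0,1\}^{\mathbb N}$; $\mathbb S$ finite binary strings, $\square$ empty string, $\omega^n$ first $n$ entries of $\omega$; $[s]=\{\omega:\omega^{|s|}=s\}$, $[A]=\bigcup_{s\in A}[s]$; for $A\subseteq\mathbb N_0\times\mathbb S$, $A_n=\{s:(n,s)\in A\}$. $\mathcal I$: nonempty closed subintervals of $[0,1]$; $\overline E_I(f)=\max_{p\in I}[pf(1)+(1-p)f(0)]$. Forecasting system: any map $\varphi:\mathbb S\to\mathcal I$. Supermartingale for $\varphi$: $M:\mathbb S\to\mathbb R$ with $\overline E_{\varphi(s)}(M(s\,\cdot))\le M(s)$ for all $s$; test supermartingale: non-negative with $M(\square)=1$. $\overline P_\varphi(G)=\inf\{M(\square):M\text{ supermartingale for }\varphi,\ \liminf_nM(\omega^n)\ge\mathbb 1_G(\omega)\ \forall\omega\}$. A real map $r:\mathbb S\to\mathbb R$ is lower semicomputable if there is a recursive $q:\mathbb S\times\mathbb N_0\to\mathbb Q$, non-decreasing in the second argument, with $q(s,n)\to r(s)$. $\omega$ is Martin-Löf random for $\varphi$ if every lower semicomputable test supermartingale $T$ for $\varphi$ satisfies $\sup_nT(\omega^n)<\infty$. A Martin-Löf test for $\varphi$ is a recursively enumerable $A\subseteq\mathbb N_0\times\mathbb S$ with $\overline P_\varphi([A_n])\le2^{-n}$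 for all $n$; $\omega$ is Martin-Löf test random for $\varphi$ if $\omega\notin\bigcap_n[A_n]$ for every Martin-Löf test $A$ for $\varphi$. *)

(* Defs.v *)
From HB Require Import structures.
From mathcomp Require Import all_boot all_order all_algebra.
From mathcomp Require Import all_classical all_reals all_analysis.
Set Implicit Arguments. Unset Strict Implicit. Unset Printing Implicit Defensive.
Import Order.TTheory GRing.Theory Num.Theory.
Import numFieldNormedType.Exports.
Local Open Scope classical_set_scope.
Local Open Scope ring_scope.

Inductive prog : Type :=
| PZero : prog
| PSucc : prog
| PProj : nat -> prog
| PComp : prog -> list prog -> prog
| PRec  : prog -> prog -> prog
| PMu   : prog -> prog.

Inductive eval : prog -> seq nat -> nat -> Prop :=
| ev_zero v : eval PZero v 0
| ev_succ x v : eval PSucc (x :: v) x.+1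
| ev_proj i v : (i < size v)%N -> eval (PProj i) v (nth 0%N v i)
| ev_comp f gs v ws y : evals gs v ws -> eval f ws y -> eval (PComp f gs) v y
| ev_rec0 f g v y : eval f v y -> eval (PRec f g) (0%N :: v) y
| ev_recS f g n v y z : eval (PRec f g) (n :: v) y -> eval g (n :: y :: v) z ->
    eval (PRec f g) (n.+1 :: v) z
| ev_mu f v n : eval f (n :: v) 0 ->
    (forall m, (m < n)%N -> exists k, eval f (m :: v) k.+1) -> eval (PMu f) v n
with evals : list prog -> seq nat -> seq nat -> Prop :=
| evs_nil v : evals nil v nil
| evs_cons g gs v w ws : eval g v w -> evals gs v ws -> evals (g :: gs) v (w :: ws).

Definition recursive_fun (F : nat -> nat) : Prop :=
  exists p : prog, forall n, eval p [:: n] (F n).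

Definition pair_code (a b : nat) : nat := (2 ^ a * (2 * b).+1).-1.
Fixpoint str_code (s : seq bool) : nat :=
  match s with nil => 0%N | b :: t => (2 * str_code t + 1 + b)%N end.
Definition int_code (z : int) : nat :=
  match z with Posz n => (2 * n)%N | Negz n => (2 * n).+1 end.
Definition rat_code (q : rat) : nat := pair_code (int_code (numq q)) (int_code (denq q)).

Definition recursive_SNQ (q : seq bool -> nat -> rat) : Prop :=
  exists F : nat -> nat, recursive_fun F /\
    forall s n, F (pair_code (str_code s) n) = rat_code (q s n).

Definition rec_enum (A : nat -> seq bool -> Prop) : Prop :=
  exists p : prog, forall n s, A n s <-> exists y, eval p [:: pair_code n (str_code s)] y.

Definition Omega := nat -> bool.

Definition prefix (w : Omega) (n : nat) : seq bool := mkseq w n.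

Definition cyl (s : seq bool) : set Omega := [set w | prefix w (size s) = s].
Definition cylA (A : nat -> seq bool -> Prop) (n : nat) : set Omega :=
  [set w | exists s, A n s /\ cyl s w].

Section Forecast.
Variable R : realType.

(* A forecasting system maps each string to a nonempty closed subinterval
   [lo, hi] of [0,1], given as the pair (lo, hi). *)
Definition forecasting_system (phi : seq bool -> R * R) : Prop :=
  forall s, 0 <= (phi s).1 /\ (phi s).1 <= (phi s).2 /\ (phi s).2 <= 1.

Definition upper_exp (I : R * R) (f : bool -> R) : R :=
  sup [set p * f true + (1 - p) * f false | p in `[I.1, I.2]%classic].

Definition supermartingale (phi : seq bool -> R * R) (M : seq bool -> R) : Prop :=
  forall s, upper_exp (phi s) (fun b => M (rcons s b)) <= M s.

Definition test_supermartingale (phi : seq bool -> R * R) (M : seq bool -> R) : Prop :=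
  supermartingale phi M /\ (forall s, 0 <= M s) /\ M [::] = 1.

Definition upper_prob (phi : seq bool -> R * R) (G : set Omega) : \bar R :=
  ereal_inf [set (M [::])%:E | M in
    [set M | supermartingale phi M /\
       forall w : Omega, (((w \in G)%:R)%:E <= limn_einf (fun n => (M (prefix w n))%:E))%E]].

Definition lower_semicomputable (r : seq bool -> R) : Prop :=
  exists q : seq bool -> nat -> rat, recursive_SNQ q /\
    (forall s n, q s n <= q s n.+1) /\
    (forall s, (fun n => (ratr (q s n) : R)) @ \oo --> r s).

Definition ML_random (phi : seq bool -> R * R) (w : Omega) : Prop :=
  forall T : seq bool -> R, test_supermartingale phi T -> lower_semicomputable T ->
    exists C : R, forall n, T (prefix w n) <= C.

Definition ML_test (phi : seq bool -> R * R) (A : nat -> seq bool -> Prop) : Prop :=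
  rec_enum A /\ forall n, (upper_prob phi (cylA A n) <= (2%:R ^- n)%:E)%E.

Definition ML_test_random (phi : seq bool -> R * R) (w : Omega) : Prop :=
  forall A, ML_test phi A -> ~ (forall n, cylA A n w).

End Forecast.

(* Main.v *)
Require Import Defs.
From Stdlib Require List.
From HB Require Import structures.
From mathcomp Require Import all_boot all_order all_algebra.
From mathcomp Require Import all_classical all_reals all_analysis.
From mathcomp Require Import zify.
From Stdlib Require Import Lia.
Import Defs.
Set Implicit Arguments. Unset Strict Implicit. Unset Printing Implicit Defensive.
Import Order.TTheory GRing.Theory Num.Theory.
Fixpoint prog_ind' (P : prog -> Prop)
  (H0 : P PZero) (H1 : P PSucc) (H2 : forall i, P (PProj i))
  (H3 : forall f gs, P f -> List.Forall P gs -> P (PComp f gs))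
  (H4 : forall f g, P f -> P g -> P (PRec f g))
  (H5 : forall f, P f -> P (PMu f)) (p : prog) {struct p} : P p :=
  match p with
  | PZero => H0 | PSucc => H1 | PProj i => H2 i
  | PComp f gs => H3 f gs (prog_ind' H0 H1 H2 H3 H4 H5 f)
      ((fix go (l : list prog) : List.Forall P l :=
         match l with nil => List.Forall_nil _
         | g :: l' => List.Forall_cons _ (prog_ind' H0 H1 H2 H3 H4 H5 g) (go l') end) gs)
  | PRec f g => H4 f g (prog_ind' H0 H1 H2 H3 H4 H5 f) (prog_ind' H0 H1 H2 H3 H4 H5 g)
  | PMu f => H5 f (prog_ind' H0 H1 H2 H3 H4 H5 f)
  end.

Definition det (p : prog) := forall v y y', eval p v y -> eval p v y' -> y = y'.

Lemma evals_det gs v : List.Forall det gs -> forall ws ws0,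
  evals gs v ws -> evals gs v ws0 -> ws = ws0.
Proof.
elim => [|g l Hg Hl IH] ws ws0 E1 E2.
  by inversion E1; inversion E2.
inversion E1; inversion E2; subst.
match goal with A : eval g v ?a, B : eval g v ?b, C : evals l v ?c, D : evals l v ?d |- _ =>
  by rewrite (Hg _ _ _ A B) (IH _ _ C D) end.
Qed.

Lemma eval_det p : det p.
Proof.
elim/prog_ind': p.
- by move=> v y y' H1 H2; inversion H1; inversion H2.
- by move=> v y y' H1 H2; inversion H1; inversion H2; subst; congruence.
- by move=> i v y y' H1 H2; inversion H1; inversion H2.
- move=> f gs IHf IHgs v y y' H1 H2; inversion H1; inversion H2; subst.
  match goal with A : evals gs v ?a, B : evals gs v ?b, C : eval f ?a y, D : eval f ?b y' |- _ =>
    have E := evals_det IHgs A B; subst; exact: IHf C D end.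
- move=> f g IHf IHg v y y' H1.
  have [n [v' Ev]] : exists n v', v = n :: v' by inversion H1; eauto.
  subst v; elim: n y y' H1 => [|n IH] y y' H1 H2.
    inversion H1; inversion H2; subst.
    match goal with A : eval f v' ?a, B : eval f v' ?b |- _ => exact: IHf A B end.
  inversion H1; inversion H2; subst.
  match goal with A : eval (PRec f g) _ ?a, B : eval (PRec f g) _ ?b |- _ =>
    have E := IH _ _ A B; subst end.
  match goal with A : eval g _ y, B : eval g _ y' |- _ => exact: IHg A B end.
- move=> f IHf v y y' H1 H2; inversion H1; inversion H2; subst.
  case: (ltngtP y y') => // Hlt.
  + have [k Hk] := H8 _ Hlt; by have := IHf _ _ _ H0 Hk.
  + have [k Hk] := H3 _ Hlt; by have := IHf _ _ _ H7 Hk.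
Qed.

Definition ADD := PRec (PProj 0) (PComp PSucc [:: PProj 1]).
Definition MUL := PRec PZero (PComp ADD [:: PProj 2; PProj 1]).
Definition PRED := PRec PZero (PProj 0).
Definition SUBR := PRec (PProj 0) (PComp PRED [:: PProj 1]).
Definition POW2 := PRec (PComp PSucc [:: PZero]) (PComp ADD [:: PProj 1; PProj 1]).

Lemma ev1 g v w : eval g v w -> evals [:: g] v [:: w].
Proof. by move=> H; apply: evs_cons H (evs_nil _). Qed.
Lemma ev2 g h v w u : eval g v w -> eval h v u -> evals [:: g; h] v [:: w; u].
Proof. by move=> H1 H2; apply: evs_cons H1 (ev1 H2). Qed.
Lemma evP i v : (i < size v)%N -> eval (PProj i) v (nth 0%N v i).
Proof. exact: ev_proj. Qed.

Lemma ADD_ok n y : eval ADD [:: n; y] (n + y)%N.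
Proof.
elim: n => [|n IH]; first exact: (ev_rec0 _ (evP (v:=[:: y]) (i:=0) _)).
apply: ev_recS IH _; apply: ev_comp (ev1 (evP (v:=[:: n; n + y; y]) (i:=1) _)) _ => //.
exact: ev_succ.
Qed.

Lemma MUL_ok n y : eval MUL [:: n; y] (n * y)%N.
Proof.
elim: n => [|n IH]; first exact: ev_rec0 (ev_zero _).
apply: ev_recS IH _; rewrite mulSn.
apply: ev_comp (ev2 (evP (v:=[:: n; n * y; y]) (i:=2) _) (evP (v:=[:: n; n * y; y]) (i:=1) _)) _ => //.
exact: ADD_ok.
Qed.

Lemma PRED_ok n : eval PRED [:: n] n.-1.
Proof.
elim: n => [|n IH]; first exact: ev_rec0 (ev_zero _).
exact: ev_recS IH (evP (v:=[:: n; n.-1]) (i:=0) isT).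
Qed.

Lemma SUBR_ok n x : eval SUBR [:: n; x] (x - n)%N.
Proof.
elim: n => [|n IH]; first by rewrite subn0; exact: (ev_rec0 _ (evP (v:=[:: x]) (i:=0) _)).
apply: ev_recS IH _; rewrite subnS.
apply: ev_comp (ev1 (evP (v:=[:: n; x - n; x]) (i:=1) _)) _ => //.
exact: PRED_ok.
Qed.

Lemma POW2_ok n : eval POW2 [:: n] (2 ^ n)%N.
Proof.
elim: n => [|n IH].
  apply: ev_rec0; apply: ev_comp (ev1 (ev_zero _)) _; exact: ev_succ.
apply: ev_recS IH _; rewrite expnS mul2n -addnn.
apply: ev_comp (ev2 (evP (v:=[:: n; 2 ^ n]) (i:=1) _) (evP (v:=[:: n; 2 ^ n]) (i:=1) _)) _ => //.
exact: ADD_ok.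
Qed.

Inductive ex :=
| EVar of nat | EZero | ESucc of ex | EAdd of ex & ex | EMul of ex & ex
| ESub of ex & ex | EPow2 of ex | ECall of prog & (nat -> nat) & ex
| EBprod of ex & ex.

Fixpoint bprod (g : nat -> nat) (n : nat) : nat :=
  match n with 0 => g 0 | n'.+1 => (bprod g n' * g n)%N end.

Lemma bprod_eq0 g n : bprod g n = 0%N <-> exists2 i, (i <= n)%N & g i = 0%N.
Proof.
elim: n => [|n IH] /=.
  by split=> [H|[i]]; [exists 0%N | rewrite leqn0 => /eqP ->].
split.
  move/eqP; rewrite muln_eq0 => /orP[/eqP/IH [i Hi E]|/eqP E].
    by exists i => //; exact: leqW.
  by exists n.+1.
case=> i; rewrite leq_eqVlt => /orP[/eqP ->|Hi] E; apply/eqP; rewrite muln_eq0.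
  by rewrite E eqxx orbT.
by apply/orP; left; apply/eqP/IH; exists i.
Qed.

Fixpoint den (e : ex) (v : seq nat) : nat :=
  match e with
  | EVar i => nth 0%N v i
  | EZero => 0%N
  | ESucc a => (den a v).+1
  | EAdd a b => (den a v + den b v)%N
  | EMul a b => (den a v * den b v)%N
  | ESub a b => (den a v - den b v)%N
  | EPow2 a => (2 ^ den a v)%N
  | ECall _ f a => f (den a v)
  | EBprod b body => bprod (fun i => den body (i :: v)) (den b v)
  end.

Fixpoint wf (k : nat) (e : ex) : Prop :=
  match e with
  | EVar i => (i < k)%N
  | EZero => True
  | ESucc a => wf k a
  | EAdd a b => wf k a /\ wf k b
  | EMul a b => wf k a /\ wf k b
  | ESub a b => wf k a /\ wf k b
  | EPow2 a => wf k a
  | ECall p f a => (forall n, eval p [:: n] (f n)) /\ wf k a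
  | EBprod b body => wf k b /\ wf k.+1 body
  end.

Fixpoint projs (off k : nat) : list prog :=
  match k with 0 => nil | k'.+1 => PProj off :: projs off.+1 k' end.

Lemma projs_ok v pre : evals (projs (size pre) (size v)) (pre ++ v) v.
Proof.
elim: v pre => [|x v IH] pre /=; first exact: evs_nil.
apply: evs_cons.
  have := @evP (size pre) (pre ++ x :: v); rewrite nth_cat ltnn subnn; apply.
  by rewrite size_cat /= addnS ltnS leq_addr.
by have := IH (rcons pre x); rewrite size_rcons cat_rcons.
Qed.

Fixpoint comp (k : nat) (e : ex) : prog :=
  match e with
  | EVar i => PProj i
  | EZero => PZero
  | ESucc a => PComp PSucc [:: comp k a]
  | EAdd a b => PComp ADD [:: comp k a; comp k b]
  | EMul a b => PComp MUL [:: comp k a; comp k b]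
  | ESub a b => PComp SUBR [:: comp k b; comp k a]
  | EPow2 a => PComp POW2 [:: comp k a]
  | ECall p _ a => PComp p [:: comp k a]
  | EBprod b body =>
      PComp (PRec (PComp (comp k.+1 body) (PZero :: projs 0 k))
                  (PComp MUL [:: PProj 1;
                      PComp (comp k.+1 body) (PComp PSucc [:: PProj 0] :: projs 2 k)]))
            (comp k b :: projs 0 k)
  end.

Lemma comp_ok e : forall k v, wf k e -> size v = k -> eval (comp k e) v (den e v).
Proof.
elim: e => [i|| a IHa | a IHa b IHb | a IHa b IHb | a IHa b IHb | a IHa | p f a IHa
           | b IHb body IHbody] k v /= Hwf Hs.
- by apply: evP; rewrite Hs.
- exact: ev_zero.
- apply: ev_comp (ev1 (IHa _ _ Hwf Hs)) _; exact: ev_succ.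
- case: Hwf => Ha Hb; apply: ev_comp (ev2 (IHa _ _ Ha Hs) (IHb _ _ Hb Hs)) _; exact: ADD_ok.
- case: Hwf => Ha Hb; apply: ev_comp (ev2 (IHa _ _ Ha Hs) (IHb _ _ Hb Hs)) _; exact: MUL_ok.
- case: Hwf => Ha Hb; apply: ev_comp (ev2 (IHb _ _ Hb Hs) (IHa _ _ Ha Hs)) _; exact: SUBR_ok.
- apply: ev_comp (ev1 (IHa _ _ Hwf Hs)) _; exact: POW2_ok.
- case: Hwf => Hp Ha; apply: ev_comp (ev1 (IHa _ _ Ha Hs)) _; exact: Hp.
- case: Hwf => Hb Hbody.
  apply: ev_comp (evs_cons (IHb _ _ Hb Hs) _) _.
    by rewrite -Hs; exact: (projs_ok v [::]).
  elim: (den b v) => [|n IH] /=.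
    apply: ev_rec0; apply: ev_comp (IHbody _ _ Hbody _) => /=; last by rewrite Hs.
    apply: evs_cons (ev_zero _) _; rewrite -Hs; exact: (projs_ok v [::]).
  apply: ev_recS IH _.
  apply: ev_comp (ev2 (evP (v := n :: bprod (fun i => den body (i :: v)) n :: v) (i:=1) _) _) _ => //.
    apply: ev_comp (IHbody _ (n.+1 :: v) Hbody _); last by rewrite /= Hs.
    apply: evs_cons.
      apply: ev_comp (ev1 (evP (v := n :: bprod (fun i => den body (i :: v)) n :: v) (i:=0) _)) _ => //.
      exact: ev_succ.
    rewrite -Hs; exact: (projs_ok v [:: n; bprod (fun i => den body (i :: v)) n]).
  exact: MUL_ok.
Qed.

Definition one := ESucc EZero.
Definition EPair a b := ESub (EMul (EPow2 a) (ESucc (EAdd b b))) one.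
Definition EDist a b := EAdd (ESub a b) (ESub b a).
Definition atom p F :=
  EAdd (EAdd (EDist (EVar 6) (EPair (EVar 4) (EVar 3)))
             (EDist (ECall p F (EPair (EVar 3) (EVar 2)))
                    (EPair (EAdd (EVar 1) (EVar 1)) (EAdd (EVar 0) (EVar 0)))))
       (ESub one (ESub (EVar 1) (EMul (EPow2 (EVar 4)) (EVar 0)))).
Definition TestE p F :=
  EBprod (EVar 0) (EBprod (EVar 1) (EBprod (EVar 2) (EBprod (EVar 3)
     (EBprod (EVar 4) (atom p F))))).

Lemma den_pair a b v : den (EPair a b) v = pair_code (den a v) (den b v).
Proof. by rewrite /= /pair_code subn1 addnn -mul2n. Qed.

Lemma dist0 u w : ((u - w) + (w - u) = 0 <-> u = w)%N.
Proof. lia. Qed.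

Lemma den_atom p F d k m c a z x :
  den (atom p F) [:: d; k; m; c; a; z; x] = 0%N <->
  [/\ x = pair_code a c, F (pair_code c m) = pair_code (2 * k) (2 * d)
    & (2 ^ a * d < k)%N].
Proof.
rewrite /atom /EDist /=.
have Hp u w : (2 ^ u * (w + w).+1 - 1)%N = pair_code u w.
  by rewrite /pair_code subn1 addnn -mul2n.
rewrite !Hp !mul2n -!addnn.
move: (pair_code a c) (F (pair_code c m)) (pair_code (k + k) (d + d)) (2 ^ a * d)%N => X Y Z W.
split; [move=> H; split; lia | case=> *; lia].
Qed.


Lemma TestE_spec p F z x :
  den (TestE p F) [:: z; x] = 0%N <->
  exists a c m k d, ((a <= z)%N /\ (c <= z)%N /\ (m <= z)%N /\ (k <= z)%N /\ (d <= z)%N) /\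
    [/\ x = pair_code a c, F (pair_code c m) = pair_code (2 * k) (2 * d)
    & (2 ^ a * d < k)%N].
Proof.
rewrite /TestE /= bprod_eq0; split.
  case=> a Ha /bprod_eq0 [c Hc /bprod_eq0 [m Hm /bprod_eq0 [k Hk /bprod_eq0 [d Hd H]]]].
  have {}H := (den_atom p F d k m c a z x).1 H.
  by exists a, c, m, k, d; split; first by repeat split.
case=> a [c [m [k [d [[Ha [Hc [Hm [Hk Hd]]]] H]]]]].
exists a => //; apply/bprod_eq0; exists c => //; apply/bprod_eq0; exists m => //.
apply/bprod_eq0; exists k => //; apply/bprod_eq0; exists d => //; exact: (den_atom p F d k m c a z x).2 H.
Qed.

Definition Prog p F := PMu (comp 2 (TestE p F)).

Lemma wf_TestE p F : (forall n, eval p [:: n] (F n)) -> wf 2 (TestE p F).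
Proof. by move=> H; rewrite /=; repeat split. Qed.

Lemma Prog_halt p F x : (forall n, eval p [:: n] (F n)) ->
  (exists y, eval (Prog p F) [:: x] y) <-> exists z, den (TestE p F) [:: z; x] = 0%N.
Proof.
move=> Hp; have W := wf_TestE Hp; split.
  case=> y H; inversion H; subst; exists y.
  match goal with A : eval _ (y :: _) 0 |- _ =>
    exact: (eval_det (@comp_ok _ 2 [:: y; x] W erefl) A) end.
move=> Hex.
have Hex' : exists z, den (TestE p F) [:: z; x] == 0%N by case: Hex => z /eqP; exists z.
case: (ex_minnP Hex') => n /eqP Hn Hmin.
apply: (ex_intro _ n); apply: ev_mu.
  by have := (@comp_ok _ 2 [:: n; x] W erefl); rewrite Hn.
move=> m Hm; exists (den (TestE p F) [:: m; x]).-1.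
rewrite prednK; first exact: (@comp_ok _ 2 [:: m; x] W erefl).
rewrite lt0n; apply/negP => /eqP E.
have := Hmin m; rewrite E eqxx => /(_ isT); rewrite leqNgt Hm //.
Qed.

Lemma pc_inj0 a b a' b' : (2 ^ a * (2 * b).+1 = 2 ^ a' * (2 * b').+1)%N -> a = a' /\ b = b'.
Proof.
elim: a a' => [|a IH] [|a'].
- rewrite !expn0 !mul1n; lia.
- rewrite expn0 mul1n expnS -mulnA; move: (2 ^ a' * (2 * b').+1)%N => Y; lia.
- rewrite expn0 mul1n expnS -mulnA; move: (2 ^ a * (2 * b).+1)%N => Y; lia.
- rewrite !expnS -!mulnA => H.
  have : (2 ^ a * (2 * b).+1 = 2 ^ a' * (2 * b').+1)%N.
    move: H; move: (2 ^ a * _)%N (2 ^ a' * _)%N => Y Z; lia.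
  by case/IH => -> ->.
Qed.

Lemma pair_code_inj a b a' b' : pair_code a b = pair_code a' b' -> a = a' /\ b = b'.
Proof.
rewrite /pair_code => H; apply: pc_inj0.
have h1 : (0 < 2 ^ a * (2 * b).+1)%N by rewrite muln_gt0 expn_gt0.
have h2 : (0 < 2 ^ a' * (2 * b').+1)%N by rewrite muln_gt0 expn_gt0.
move: h1 h2 H; move: (2 ^ a * _)%N (2 ^ a' * _)%N => Y Z; lia.
Qed.

Lemma int_code_even z k : int_code z = (2 * k)%N -> z = Posz k.
Proof. case: z => n /= H; [congr Posz|]; lia. Qed.

Lemma rat_cmp n (x : rat) k d : numq x = Posz k -> denq x = Posz d ->
  (((2 ^ n)%:R : rat) < x)%R <-> (2 ^ n * d < k)%N.
Proof.
move=> Hk Hd.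
have dpos : (0 < (d%:R : rat))%R.
  by rewrite ltr0n; have := denq_gt0 x; rewrite Hd.
rewrite -(ltr_pM2r dpos).
have -> : (x * d%:R = k%:R :> rat)%R.
  by have := numqE x; rewrite Hk Hd !pmulrn => <-.
by rewrite -natrM ltr_nat.
Qed.

Lemma A_char p F (q : seq bool -> nat -> rat) :
  (forall n, eval p [:: n] (F n)) ->
  (forall s n, F (pair_code (str_code s) n) = rat_code (q s n)) ->
  forall n s, (exists y, eval (Prog p F) [:: pair_code n (str_code s)] y) <->
    exists m, (((2 ^ n)%:R : rat) < q s m)%R.
Proof.
move=> Hp HF n s; rewrite (Prog_halt _ Hp); split.
  case=> z /TestE_spec [a [c [m [k [d [_ [H1 H2 H3]]]]]]].
  case: (pair_code_inj H1) => En Ec; subst a c.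
  rewrite HF /rat_code in H2; case: (pair_code_inj H2) => /int_code_even Hk /int_code_even Hd.
  by exists m; apply/(rat_cmp _ Hk Hd).
case=> m Hm.
set x := q s m in Hm.
have xpos : (0 < x)%R by apply: lt_trans Hm; rewrite ltr0n expn_gt0.
have Hk : numq x = Posz `|numq x|%N by rewrite abszE gtr0_norm // numq_gt0.
have Hd : denq x = Posz `|denq x|%N by rewrite abszE gtr0_norm // denq_gt0.
have Hc := (rat_cmp n Hk Hd).1 Hm.
exists (maxn n (maxn (str_code s) (maxn m (maxn `|numq x|%N `|denq x|%N)))).
apply/TestE_spec; exists n, (str_code s), m, `|numq x|%N, `|denq x|%N; split.
  by repeat split; lia.
split => //.
by rewrite HF -/x /rat_code {1}Hk {1}Hd.
Qed.

Import numFieldNormedType.Exports.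
Local Open Scope classical_set_scope.
Local Open Scope ring_scope.

Section Ana.
Variable R : realType.

Lemma ue_ge (I : R * R) (f : bool -> R) p :
  0 <= I.1 -> I.2 <= 1 -> I.1 <= p <= I.2 ->
  p * f true + (1 - p) * f false <= upper_exp I f.
Proof.
move=> h0 h1 /andP[hp1 hp2]; apply: ub_le_sup.
  exists (`|f true| + `|f false|) => _ [r /= Hr <-].
  move: Hr; rewrite in_itv /= => /andP[r1 r2].
  have r0 : 0 <= r by apply: le_trans r1.
  have r1' : r <= 1 by apply: le_trans h1.
  rewrite lerD //.
    by rewrite (le_trans (ler_norm _)) // normrM ger0_norm // ler_piMl.
  rewrite (le_trans (ler_norm _)) // normrM ger0_norm ?subr_ge0 //.
  by rewrite ler_piMl ?subr_ge0 // lerBlDr lerDl.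
by exists p => //=; rewrite in_itv /= hp1 hp2.
Qed.

Lemma ue_le (I : R * R) (f : bool -> R) c :
  I.1 <= I.2 -> (forall p, I.1 <= p <= I.2 -> p * f true + (1 - p) * f false <= c) ->
  upper_exp I f <= c.
Proof.
move=> h H; apply: ge_sup.
  by exists (I.1 * f true + (1 - I.1) * f false); exists I.1 => //=; rewrite in_itv /= lexx h.
by move=> _ [r /= Hr <-]; apply: H; move: Hr; rewrite in_itv.
Qed.

Lemma liminf_ge (u : nat -> \bar R) (a : \bar R) N :
  (forall k, (N <= k)%N -> (a <= u k)%E) -> (a <= limn_einf u)%E.
Proof.
move=> H; rewrite limn_einf_lim; apply: lime_ge; first exact: is_cvg_einfs.
exists N => // m /= Hm; apply: le_ereal_inf_tmp => _ [k /= Hk <-].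
apply: H; exact: leq_trans Hk.
Qed.


Definition thr (n : nat) : R := 2%:R ^+ n.
Definition jidx (T : seq bool -> R) n (s : seq bool) :=
  find (fun i => thr n < T (take i s)) (iota 0 (size s).+1).
Definition Mst T n s := (thr n)^-1 * T (take (jidx T n s) s).

Lemma iota_rcons (s : seq bool) b :
  iota 0 (size (rcons s b)).+1 = iota 0 (size s).+1 ++ [:: (size s).+1].
Proof. by rewrite size_rcons -addn1 iotaD. Qed.

Lemma take_rcons_le (s : seq bool) b i : (i <= size s)%N -> take i (rcons s b) = take i s.
Proof. by move=> h; rewrite -cats1 takel_cat. Qed.

Lemma eqP_rcons T n (s : seq bool) b :
  {in iota 0 (size s).+1, (fun i => thr n < T (take i (rcons s b))) =1
                          (fun i => thr n < T (take i s))}.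
Proof. by move=> i; rewrite mem_iota /= ltnS => hi; rewrite take_rcons_le. Qed.

Lemma Mst_has T n s b : has (fun i => thr n < T (take i s)) (iota 0 (size s).+1) ->
  Mst T n (rcons s b) = Mst T n s.
Proof.
move=> H; rewrite /Mst /jidx iota_rcons find_cat.
rewrite (eq_in_has (@eqP_rcons T n s b)) H (eq_in_find (@eqP_rcons T n s b)).
rewrite take_rcons_le //.
have := H; rewrite has_find size_iota ltnS; exact.
Qed.

Lemma Mst_nohas T n s b : ~~ has (fun i => thr n < T (take i s)) (iota 0 (size s).+1) ->
  Mst T n (rcons s b) = (thr n)^-1 * T (rcons s b) /\ Mst T n s = (thr n)^-1 * T s.
Proof.
move=> H; rewrite /Mst /jidx iota_rcons find_cat.
rewrite (eq_in_has (@eqP_rcons T n s b)) (negbTE H) size_iota.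
have := H; rewrite has_find size_iota -leqNgt => H2.
split; rewrite take_oversize //.
  by rewrite size_rcons leq_addr.
have := find_size (fun i => thr n < T (take i s)) (iota 0 (size s).+1).
rewrite size_iota => h; apply: leq_trans _ H2; exact: leqnSn.
Qed.


Lemma thr_gt0 n : 0 < thr n.
Proof. by rewrite /thr exprn_gt0. Qed.

Lemma Mst_super phi T n : forecasting_system phi -> supermartingale phi T ->
  supermartingale phi (Mst T n).
Proof.
move=> Hphi HT s; have [h0 [h12 h1]] := Hphi s.
have ci : 0 < (thr n)^-1 by rewrite invr_gt0 thr_gt0.
case: (boolP (has (fun i => thr n < T (take i s)) (iota 0 (size s).+1))) => H.
  apply: ue_le => // p _; rewrite !Mst_has //.
  by rewrite -mulrDl addrC subrK mul1r.
have [E0 Es] := Mst_nohas false H; have [E1 _] := Mst_nohas true H.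
apply: ue_le => // p /andP[hp1 hp2]; rewrite E0 E1 Es.
rewrite mulrCA [(1 - p) * _]mulrCA -mulrDr ler_pM2l //.
apply: le_trans (HT s); apply: ue_ge => //; exact/andP.
Qed.

Lemma Mst_ge0 T n s : (forall s, 0 <= T s) -> 0 <= Mst T n s.
Proof. by move=> H; rewrite /Mst mulr_ge0 // invr_ge0 ltW // thr_gt0. Qed.

Lemma Mst_nil T n : T [::] = 1 -> Mst T n [::] = (thr n)^-1.
Proof. by move=> H; rewrite /Mst H mulr1. Qed.

Lemma take_prefix (w : Omega) j k : (j <= k)%N -> take j (prefix w k) = prefix w j.
Proof. by move=> h; rewrite /prefix /mkseq -map_take take_iota (minn_idPl h). Qed.

Lemma size_prefix (w : Omega) k : size (prefix w k) = k.
Proof. by rewrite /prefix size_mkseq. Qed.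

Lemma Mst_big T n (w : Omega) j0 : thr n < T (prefix w j0) ->
  forall k, (j0 <= k)%N -> 1 <= Mst T n (prefix w k).
Proof.
move=> Hj k hk.
set P := (fun i => thr n < T (take i (prefix w k))).
have Hhas : has P (iota 0 (size (prefix w k)).+1).
  apply/hasP; exists j0; first by rewrite mem_iota size_prefix ltnS hk.
  by rewrite /P take_prefix.
have := nth_find 0%N Hhas; rewrite {1}/P.
have hf := Hhas; rewrite has_find size_iota in hf.
rewrite nth_iota // => HT.
rewrite /Mst /jidx -/P.
rewrite -(mulVf (lt0r_neq0 (thr_gt0 n))) ler_pM2l ?invr_gt0 ?thr_gt0 //.
exact: ltW.
Qed.

End Ana.

Lemma thr_ratr (R : realType) n : ratr ((2 ^ n)%:R : rat) = thr R n.
Proof. by rewrite ratr_nat natrX. Qed.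

Theorem proposition6p1 (R : realType) (phi : seq bool -> R * R) (omega : Omega) :
  forecasting_system phi -> ML_test_random phi omega -> ML_random phi omega.
Proof.
move=> Hphi Hrand T [HT [Tge0 T0]] [q [[F [[p Hp] HF]] [Hmono Hcvg]]].
case: (pselect (exists C, forall n, T (prefix omega n) <= C)) => // Hnb; exfalso.
have Hunb C : exists k, C < T (prefix omega k).
  case: (pselect (exists k, C < T (prefix omega k))) => // H; exfalso; apply: Hnb.
  exists C => k; rewrite leNgt; apply/negP => h; apply: H; by exists k.
have qleT s m : ratr (q s m) <= T s.
  have Hnd : nondecreasing_seq (fun m => (ratr (q s m) : R)).
    by apply/nondecreasing_seqP => k; rewrite ler_rat.
  have := nondecreasing_cvgn_le Hnd (cvgP _ (Hcvg s)) m.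
  by rewrite (cvg_lim _ (Hcvg s)).
set A := fun n s => exists y, eval (Prog p F) [:: pair_code n (str_code s)] y.
have Asound n s : A n s -> thr R n < T s.
  move=> /(A_char Hp HF) [m Hm]; apply: lt_le_trans (qleT s m).
  by rewrite -thr_ratr ltr_rat.
apply: (Hrand A).
  split; first by exists (Prog p F).
  move=> n; rewrite /upper_prob; apply: ereal_inf_lbound.
  exists (Mst T n); last by rewrite Mst_nil.
  split; first exact: Mst_super.
  move=> w; case: (pselect (cylA A n w)) => Hw.
    rewrite mem_set //=; case: Hw => s [As Cs].
    apply: (@liminf_ge _ _ _ (size s)) => k hk; rewrite lee_fin.
    apply: (Mst_big (j0 := size s)) => //.
    by rewrite Cs; exact: Asound.
  rewrite memNset //=; apply: (@liminf_ge _ _ _ 0%N) => k _; rewrite lee_fin.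
  exact: Mst_ge0.
move=> n; have [k Hk] := Hunb (thr R n).
exists (prefix omega k); split; last by rewrite /cyl /= size_prefix.
apply/(A_char Hp HF).
have [N _ HN] := cvgr_gt _ (Hcvg (prefix omega k)) _ Hk.
exists N; rewrite -(ltr_rat R) thr_ratr. exact: (HN N (leqnn N)).
Qed.
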